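(* Let $\mathcal{C}_1\xleftarrow{F}\mathcal{C}_{12}\xrightarrow{G}\mathcal{C}_2$ be a correspondence in $\mathrm{Cats}'$ such that $F$ is an equivalence, and let $F^{-1}$ be a quasi-inverse of $F$. The following are equivalent: (a) the correspondence is admissible; (b) the map $\mathrm{Ob}\,\mathcal{C}_{12}\to\{(c_1,c_2,\psi)\mid c_i\in\mathrm{Ob}\,\mathcal{C}_i,\ \psi:GF^{-1}(c_1)\xrightarrow{\sim}c_2\}$ is bijective. Here the map sends $c$ to $(F(c),G(c),\psi)$, where $\psi:GF^{-1}F(c)\xrightarrow{\sim}G(c)$ is induced by the isomorphism $F^{-1}F(c)\xrightarrow{\sim}c$; (c) the functor $H=(F,G):\mathcal{C}_{12}\to\mathcal{C}_1\times\mathcal{C}_2$ has the following property: for every $c\in\mathcal{C}_{12}$, every isomorphism in $\mathcal{C}_1\times\mathcal{C}_2$ with source $H(c)$ has one and only one lift to an isomorphism in $\mathcal{C}_{12}$ with source $c$.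
   Context: $\mathrm{Cats}'$ is the naive 1-category of small categories, whose morphisms are functors on the nose. A correspondence from $\mathcal{C}_1$ to $\mathcal{C}_2$ is a diagram $\mathcal{C}_1\xleftarrow{F}\mathcal{C}_{12}\xrightarrow{G}\mathcal{C}_2$ in $\mathrm{Cats}'$. A morphism of correspondences is a functor $H$ between middle terms with $F'H=F$, $G'H=G$ on the nose. For a functor $\Phi:\mathcal{C}_1\to\mathcal{C}_2$, $\mathrm{Graph}(\Phi)$ is the correspondence $\mathcal{C}_1\leftarrow\mathrm{Graph}_\Phi\to\mathcal{C}_2$. Here $\mathrm{Graph}_\Phi$ is the category of triples $(c_1,c_2,\psi)$ with $\psi:\Phi(c_1)\xrightarrow{\sim}c_2$, and the arrows are the projections. A correspondence is admissible if it is isomorphic (as a correspondence) to $\mathrm{Graph}(\Phi)$ for some functor $\Phi:\mathcal{C}_1\to\mathcal{C}_2$. *)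

(* Defs.v *)
From Stdlib Require Import ProofIrrelevance.

Set Implicit Arguments.
Unset Strict Implicit.

Record Cat := {
  Ob :> Type;
  Hom : Ob -> Ob -> Type;
  idm : forall a, Hom a a;
  comp : forall a b c, Hom b c -> Hom a b -> Hom a c;
  comp_id_l : forall a b (f : Hom a b), comp (idm b) f = f;
  comp_id_r : forall a b (f : Hom a b), comp f (idm a) = f;
  comp_assoc : forall a b c d (f : Hom a b) (g : Hom b c) (h : Hom c d),
      comp h (comp g f) = comp (comp h g) f }.
Arguments Hom {C} a b : rename.
Arguments idm {C} a : rename.
Arguments comp {C a b c} g f : rename.

Definition is_iso (C : Cat) (a b : C) (f : Hom a b) : Prop :=
  exists g : Hom b a, comp g f = idm a /\ comp f g = idm b.
Arguments is_iso {C a b} f.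

Record Functor (C D : Cat) := {
  fobj :> Ob C -> Ob D;
  fmap : forall a b, Hom a b -> Hom (fobj a) (fobj b);
  fmap_id : forall a, fmap (idm a) = idm (fobj a);
  fmap_comp : forall a b c (f : Hom a b) (g : Hom b c),
      fmap (comp g f) = comp (fmap g) (fmap f) }.
Arguments fmap {C D} F {a b} f : rename.

Definition Fid (C : Cat) : Functor C C.
Proof.
  refine {| fobj := fun x => x; fmap := fun a b f => f |}; reflexivity.
Defined.

Definition Fcomp (C D E : Cat) (G : Functor D E) (F : Functor C D) : Functor C E.
Proof.
  refine {| fobj := fun x => G (F x); fmap := fun a b f => fmap G (fmap F f) |}.
  - intro a. rewrite !fmap_id. reflexivity.
  - intros a b c f g. rewrite !fmap_comp. reflexivity.
Defined.

Definition hom_cast (C : Cat) (a a' b b' : C) (ea : a = a') (eb : b = b')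
  (f : Hom a b) : Hom a' b' :=
  match ea in _ = x, eb in _ = y return Hom x y with eq_refl, eq_refl => f end.

Definition functor_eq (C D : Cat) (F G : Functor C D) : Prop :=
  exists e : (forall x, F x = G x),
    forall a b (f : Hom a b), hom_cast (e a) (e b) (fmap F f) = fmap G f.

Record NatTrans (C D : Cat) (F G : Functor C D) := {
  nt :> forall x, Hom (F x) (G x);
  nt_nat : forall a b (f : Hom a b), comp (fmap G f) (nt a) = comp (nt b) (fmap F f) }.

Definition is_natiso (C D : Cat) (F G : Functor C D) (eta : NatTrans F G) : Prop :=
  forall x, is_iso (eta x).

Lemma fmap_iso (C D : Cat) (F : Functor C D) (a b : C) (f : Hom a b) :
  is_iso f -> is_iso (fmap F f).
Proof.
  intros [g [H1 H2]]. exists (fmap F g).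
  rewrite <- !fmap_comp, H1, H2, !fmap_id. split; reflexivity.
Qed.

Definition ProdCat (C1 C2 : Cat) : Cat.
Proof.
  refine {| Ob := (Ob C1 * Ob C2)%type;
            Hom := fun x y => (Hom (fst x) (fst y) * Hom (snd x) (snd y))%type;
            idm := fun x => (idm (fst x), idm (snd x));
            comp := fun a b c g f => (comp (fst g) (fst f), comp (snd g) (snd f)) |}.
  - intros a b [f1 f2]; simpl. rewrite !comp_id_l. reflexivity.
  - intros a b [f1 f2]; simpl. rewrite !comp_id_r. reflexivity.
  - intros a b c d [f1 f2] [g1 g2] [h1 h2]; simpl. rewrite !comp_assoc. reflexivity.
Defined.

Definition Fpair (C C1 C2 : Cat) (F : Functor C C1) (G : Functor C C2) :
  Functor C (ProdCat C1 C2).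
Proof.
  refine {| fobj := fun x => (F x, G x) : Ob (ProdCat C1 C2);
            fmap := fun a b f => (fmap F f, fmap G f) : Hom (C := ProdCat C1 C2) (F a, G a) (F b, G b) |}.
  - intro a. simpl. rewrite !fmap_id. reflexivity.
  - intros a b c f g. simpl. rewrite !fmap_comp. reflexivity.
Defined.

Record GOb (C1 C2 : Cat) (Phi : Functor C1 C2) := {
  g1 : Ob C1; g2 : Ob C2; gpsi : Hom (Phi g1) g2; gpsi_iso : is_iso gpsi }.

Record GHom (C1 C2 : Cat) (Phi : Functor C1 C2) (x y : GOb Phi) := {
  h1 : Hom (g1 x) (g1 y);
  h2 : Hom (g2 x) (g2 y);
  hcomm : comp (gpsi y) (fmap Phi h1) = comp h2 (gpsi x) }.
Arguments h1 {C1 C2 Phi x y} h : rename.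
Arguments h2 {C1 C2 Phi x y} h : rename.

Lemma GHom_eq (C1 C2 : Cat) (Phi : Functor C1 C2) (x y : GOb Phi) (f g : GHom x y) :
  h1 f = h1 g -> h2 f = h2 g -> f = g.
Proof.
  destruct f as [f1 f2 fc], g as [g1 g2 gc]; simpl; intros E1 E2.
  subst. rewrite (proof_irrelevance _ fc gc). reflexivity.
Qed.

Definition GId (C1 C2 : Cat) (Phi : Functor C1 C2) (x : GOb Phi) : GHom x x.
Proof.
  refine {| h1 := idm (g1 x); h2 := idm (g2 x) |}.
  rewrite fmap_id, comp_id_l, comp_id_r. reflexivity.
Defined.

Definition GComp (C1 C2 : Cat) (Phi : Functor C1 C2) (x y z : GOb Phi)
  (g : GHom y z) (f : GHom x y) : GHom x z.
Proof.
  refine {| h1 := comp (h1 g) (h1 f); h2 := comp (h2 g) (h2 f) |}.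
  rewrite fmap_comp, comp_assoc, (hcomm g), <- comp_assoc, (hcomm f), comp_assoc.
  reflexivity.
Defined.

Definition GraphCat (C1 C2 : Cat) (Phi : Functor C1 C2) : Cat.
Proof.
  refine {| Ob := GOb Phi; Hom := @GHom C1 C2 Phi;
            idm := @GId C1 C2 Phi; comp := @GComp C1 C2 Phi |}.
  - intros a b f. apply GHom_eq; simpl; apply comp_id_l.
  - intros a b f. apply GHom_eq; simpl; apply comp_id_r.
  - intros a b c d f g h. apply GHom_eq; simpl; apply comp_assoc.
Defined.

Definition Gproj1 (C1 C2 : Cat) (Phi : Functor C1 C2) : Functor (GraphCat Phi) C1.
Proof.
  refine {| fobj := fun x : Ob (GraphCat Phi) => g1 x; fmap := fun a b (f : Hom (C := GraphCat Phi) a b) => h1 f |};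
  reflexivity.
Defined.

Definition Gproj2 (C1 C2 : Cat) (Phi : Functor C1 C2) : Functor (GraphCat Phi) C2.
Proof.
  refine {| fobj := fun x : Ob (GraphCat Phi) => g2 x; fmap := fun a b (f : Hom (C := GraphCat Phi) a b) => h2 f |};
  reflexivity.
Defined.

Definition corr_iso (C1 C2 X Y : Cat)
  (F : Functor X C1) (G : Functor X C2) (F' : Functor Y C1) (G' : Functor Y C2) : Prop :=
  exists (K : Functor X Y) (L : Functor Y X),
    functor_eq (Fcomp F' K) F /\ functor_eq (Fcomp G' K) G /\
    functor_eq (Fcomp F L) F' /\ functor_eq (Fcomp G L) G' /\
    functor_eq (Fcomp L K) (Fid X) /\ functor_eq (Fcomp K L) (Fid Y).

Definition admissible (C1 C2 C12 : Cat) (F : Functor C12 C1) (G : Functor C12 C2) : Prop :=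
  exists Phi : Functor C1 C2, corr_iso F G (Gproj1 Phi) (Gproj2 Phi).

Definition bijective (A B : Type) (f : A -> B) : Prop :=
  (forall x y, f x = f y -> x = y) /\ (forall y, exists x, f x = y).

Definition triples (C1 C2 C12 : Cat) (G : Functor C12 C2) (Finv : Functor C1 C12) : Type :=
  { c1 : Ob C1 & { c2 : Ob C2 & { psi : Hom (G (Finv c1)) c2 | is_iso psi } } }.

Definition triple_map (C1 C2 C12 : Cat) (F : Functor C12 C1) (G : Functor C12 C2)
  (Finv : Functor C1 C12) (alpha : NatTrans (Fcomp Finv F) (Fid C12))
  (halpha : is_natiso alpha) (c : Ob C12) : triples G Finv :=
  existT _ (F c) (existT _ (G c)
    (exist _ (fmap G (alpha c)) (fmap_iso G (halpha c)))).

Definition lifts (C D : Cat) (H : Functor C D) (c : C) (d : D) (u : Hom (H c) d)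
  (c' : C) (v : Hom c c') : Prop :=
  exists e : H c' = d, hom_cast eq_refl e (fmap H v) = u.

Arguments lifts {C D H c d} u {c'} v.

Definition unique_iso_lifting (C D : Cat) (H : Functor C D) : Prop :=
  forall (c : C) (d : D) (u : Hom (H c) d), is_iso u ->
    exists (c' : C) (v : Hom c c'),
      is_iso v /\ lifts u v /\
      forall (c'' : C) (v' : Hom c c''), is_iso v' -> lifts u v' ->
        existT (fun x => Hom c x) c'' v' = existT (fun x => Hom c x) c' v.

(* Main.v *)
Require Import Defs.
From Stdlib Require Import ProofIrrelevance FunctionalExtensionality ClassicalEpsilon.
Set Implicit Arguments.
Unset Strict Implicit.

Definition inj2 := ProofIrrelevanceTheory.EqdepTheory.inj_pair2.

Definition Arr (C : Cat) := {p : Ob C * Ob C & Hom (fst p) (snd p)}.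
Definition mkA (C : Cat) (a b : C) (f : Hom a b) : Arr C :=
  existT (fun p => Hom (fst p) (snd p)) (a, b) f.
Definition src (C : Cat) (v : Arr C) : Ob C := fst (projT1 v).
Definition tgt (C : Cat) (v : Arr C) : Ob C := snd (projT1 v).
Definition isoA (C : Cat) (v : Arr C) : Prop := is_iso (projT2 v).
Definition mapA (C D : Cat) (M : Functor C D) (v : Arr C) : Arr D :=
  mkA (fmap M (projT2 v)).

Lemma AE_inv (C : Cat) (a b a' b' : C) (f : Hom a b) (f' : Hom a' b') :
  mkA f = mkA f' -> exists (ea : a = a') (eb : b = b'), hom_cast ea eb f = f'.
Proof.
  intro H.
  assert (ea : a = a') by exact (f_equal (fun v => src v) H).
  assert (eb : b = b') by exact (f_equal (fun v => tgt v) H).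
  subst a' b'. exists eq_refl, eq_refl. simpl. exact (inj2 H).
Qed.

Lemma AE_same (C : Cat) (a b : C) (f f' : Hom a b) : mkA f = mkA f' -> f = f'.
Proof. intro H. exact (inj2 H). Qed.

Lemma AE_ends (C : Cat) (a b a' b' : C) (f : Hom a b) (f' : Hom a' b') :
  mkA f = mkA f' -> a = a' /\ b = b'.
Proof. intro H. split; [exact (f_equal (fun v => src v) H)|exact (f_equal (fun v => tgt v) H)]. Qed.

Lemma AE_comp (C : Cat) (a b c a' b' c' : C) (f : Hom a b) (g : Hom b c)
  (f' : Hom a' b') (g' : Hom b' c') :
  mkA f = mkA f' -> mkA g = mkA g' -> mkA (comp g f) = mkA (comp g' f').
Proof.
  intros H1 H2. destruct (AE_ends H1) as [-> ->]. destruct (AE_ends H2) as [_ ->].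
  apply AE_same in H1. apply AE_same in H2. subst. reflexivity.
Qed.

Lemma AE_map (C D : Cat) (M : Functor C D) (a b a' b' : C) (f : Hom a b) (f' : Hom a' b') :
  mkA f = mkA f' -> mkA (fmap M f) = mkA (fmap M f').
Proof.
  intro H. destruct (AE_ends H) as [-> ->]. apply AE_same in H. subst. reflexivity.
Qed.

Lemma iso_mono (C : Cat) (a b c : C) (f : Hom a b) (g g' : Hom b c) :
  is_iso f -> comp g f = comp g' f -> g = g'.
Proof.
  intros [i [H1 H2]] E.
  rewrite <- (comp_id_r g), <- (comp_id_r g'), <- H2, !comp_assoc, E. reflexivity.
Qed.

Lemma iso_epi (C : Cat) (a b c : C) (f : Hom b c) (g g' : Hom a b) :
  is_iso f -> comp f g = comp f g' -> g = g'.
Proof.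
  intros [i [H1 H2]] E.
  rewrite <- (comp_id_l g), <- (comp_id_l g'), <- H1, <- !comp_assoc, E. reflexivity.
Qed.

Lemma AE_cancel (C : Cat) (a b c b' c' : C) (f : Hom a b) (f' : Hom a b')
  (g : Hom b c) (g' : Hom b' c') :
  is_iso f -> mkA f = mkA f' -> mkA (comp g f) = mkA (comp g' f') -> mkA g = mkA g'.
Proof.
  intros Hi H1 H2. destruct (AE_ends H1) as [_ ->]. apply AE_same in H1. subst f'.
  destruct (AE_ends H2) as [_ ->]. apply AE_same in H2. f_equal. exact (iso_mono Hi H2).
Qed.

Lemma AE_pair (D1 D2 : Cat) (a1 b1 a1' b1' : D1) (a2 b2 a2' b2' : D2)
  (f1 : Hom a1 b1) (f1' : Hom a1' b1') (f2 : Hom a2 b2) (f2' : Hom a2' b2') :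
  mkA f1 = mkA f1' -> mkA f2 = mkA f2' ->
  mkA (C := ProdCat D1 D2) (a := (a1, a2)) (b := (b1, b2)) (f1, f2)
  = mkA (C := ProdCat D1 D2) (a := (a1', a2')) (b := (b1', b2')) (f1', f2').
Proof.
  intros H1 H2. destruct (AE_ends H1) as [-> ->]. destruct (AE_ends H2) as [-> ->].
  apply AE_same in H1. apply AE_same in H2. subst. reflexivity.
Qed.

Lemma AE_unpair (D1 D2 : Cat) (a1 b1 a1' b1' : D1) (a2 b2 a2' b2' : D2)
  (f1 : Hom a1 b1) (f1' : Hom a1' b1') (f2 : Hom a2 b2) (f2' : Hom a2' b2') :
  mkA (C := ProdCat D1 D2) (a := (a1, a2)) (b := (b1, b2)) (f1, f2)
  = mkA (C := ProdCat D1 D2) (a := (a1', a2')) (b := (b1', b2')) (f1', f2') ->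
  mkA f1 = mkA f1' /\ mkA f2 = mkA f2'.
Proof.
  intro H. destruct (AE_ends H) as [E1 E2]. injection E1 as -> ->. injection E2 as -> ->.
  apply AE_same in H. injection H as -> ->. split; reflexivity.
Qed.

Lemma prod_iso (D1 D2 : Cat) (a b : ProdCat D1 D2) (f : Hom a b) :
  is_iso f <-> is_iso (fst f) /\ is_iso (snd f).
Proof.
  destruct a as [a1 a2], b as [b1 b2], f as [f1 f2]; simpl. split.
  - intros [[i1 i2] [H1 H2]]. simpl in *. injection H1 as H1 H1'. injection H2 as H2 H2'.
    split; [exists i1|exists i2]; split; assumption.
  - intros [[i1 [H1 H2]] [i2 [H1' H2']]]. exists (i1, i2). simpl. rewrite H1, H2, H1', H2'.
    split; reflexivity.
Qed.

Lemma functor_eq_eq (C D : Cat) (F G : Functor C D) : functor_eq F G -> F = G.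
Proof.
  destruct F as [fo fm fi fc], G as [go gm gi gc]. intros [e He]. simpl in *.
  assert (fo = go) by (apply functional_extensionality; exact e). subst go.
  assert (forall x, e x = eq_refl) as Hr by (intro; apply proof_irrelevance).
  assert (fm = gm).
  { apply functional_extensionality_dep; intro a.
    apply functional_extensionality_dep; intro b.
    apply functional_extensionality; intro f.
    specialize (He a b f). rewrite !Hr in He. exact He. }
  subst gm. f_equal; apply proof_irrelevance.
Qed.

Lemma fcomp_fobj (C D E : Cat) (G : Functor D E) (F : Functor C D) x :
  Fcomp G F x = G (F x).
Proof. reflexivity. Qed.

Definition ULiftA (C D : Cat) (H : Functor C D) : Prop :=
  forall (c : C) (u : Arr D), src u = H c -> isoA u ->
  exists v, src v = c /\ isoA v /\ mapA H v = u /\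
    forall v', src v' = c -> isoA v' -> mapA H v' = u -> v' = v.

Lemma lifts_iff (C D : Cat) (H : Functor C D) (c : C) (d : D) (u : Hom (H c) d)
  (c' : C) (v : Hom c c') : lifts u v <-> mapA H (mkA v) = mkA u.
Proof.
  split.
  - intros [e He]. subst d. simpl in He. subst u. reflexivity.
  - intro E. destruct (AE_ends E) as [_ e]. subst d. apply AE_same in E.
    exists eq_refl. exact E.
Qed.

Lemma sig_iff (C : Cat) (c c' c'' : C) (v : Hom c c') (v' : Hom c c'') :
  existT (fun x => Hom c x) c'' v' = existT (fun x => Hom c x) c' v <-> mkA v' = mkA v.
Proof.
  split.
  - intro E. exact (f_equal (fun s => mkA (projT2 s)) E).
  - intro E. destruct (AE_ends E) as [_ e]. subst c''. apply AE_same in E. subst. reflexivity.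
Qed.

Lemma ULift_iff (C D : Cat) (H : Functor C D) : unique_iso_lifting H <-> ULiftA H.
Proof.
  split.
  - intros HU c [[a d] u] Hs Hi. cbv [src projT1 fst] in Hs; simpl in u. subst a.
    destruct (HU c d u Hi) as [c' [v [Hv [Hl Hu]]]].
    exists (mkA v). split; [reflexivity|]. split; [exact Hv|].
    split; [apply lifts_iff; exact Hl|].
    intros [[a' b'] v'] Hs' Hi' Hm. cbv [src projT1 fst] in Hs'; simpl in v'. subst a'.
    apply sig_iff. apply Hu; [exact Hi'|apply lifts_iff; exact Hm].
  - intros HA c d u Hi.
    destruct (HA c (mkA u) eq_refl Hi) as [[[a c'] v] [Hs [Hv [Hm Hu]]]].
    cbv [src projT1 fst] in Hs; simpl in v. subst a. exists c', v. split; [exact Hv|].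
    split; [apply lifts_iff; exact Hm|].
    intros c'' v' Hi' Hl. apply sig_iff.
    exact (Hu (mkA v') eq_refl Hi' (proj1 (lifts_iff _ _) Hl)).
Qed.

Lemma comp_iso (C : Cat) (a b c : C) (f : Hom a b) (g : Hom b c) :
  is_iso f -> is_iso g -> is_iso (comp g f).
Proof.
  intros [i [H1 H2]] [j [H3 H4]]. exists (comp i j). split.
  - rewrite <- !comp_assoc, (comp_assoc f g j), H3, comp_id_l. exact H1.
  - rewrite <- !comp_assoc, (comp_assoc j i f), H2, comp_id_l. exact H4.
Qed.

Lemma AE_iso (C : Cat) (a b a' b' : C) (f : Hom a b) (f' : Hom a' b') :
  mkA f = mkA f' -> is_iso f -> is_iso f'.
Proof. intros H Hi. destruct (AE_ends H) as [-> ->]. apply AE_same in H. subst. exact Hi. Qed.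

Lemma arr_fix (C : Cat) (a b a' b' : C) (f : Hom a b) :
  a = a' -> b = b' -> {f' : Hom a' b' | mkA f = mkA f'}.
Proof. intros -> ->. exists f. reflexivity. Qed.

Lemma isoA_map (C D : Cat) (M : Functor C D) (v : Arr C) : isoA v -> isoA (mapA M v).
Proof. intro H. exact (fmap_iso M H). Qed.

Section Equiv.
Variables (C1 C2 C12 : Cat) (F : Functor C12 C1) (G : Functor C12 C2)
  (Finv : Functor C1 C12)
  (alpha : NatTrans (Fcomp Finv F) (Fid C12)) (halpha : is_natiso alpha)
  (beta : NatTrans (Fcomp F Finv) (Fid C1)) (hbeta : is_natiso beta).

Lemma nat_alpha (a b : C12) (f : Hom a b) :
  comp f (alpha a) = comp (alpha b) (fmap Finv (fmap F f)).
Proof. exact (nt_nat alpha f). Qed.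

Lemma nat_beta (a b : C1) (f : Hom a b) :
  comp f (beta a) = comp (beta b) (fmap F (fmap Finv f)).
Proof. exact (nt_nat beta f). Qed.

Lemma Finv_faithful (a b : C1) (f f' : Hom a b) : fmap Finv f = fmap Finv f' -> f = f'.
Proof.
  intro E. apply (iso_mono (hbeta a)). rewrite !nat_beta, E. reflexivity.
Qed.

Lemma F_faithful (a b : C12) (f f' : Hom a b) : fmap F f = fmap F f' -> f = f'.
Proof.
  intro E. apply (iso_mono (halpha a)). rewrite !nat_alpha, E. reflexivity.
Qed.

Lemma F_full (a b : C12) (g : Hom (F a) (F b)) : exists f, fmap F f = g.
Proof.
  destruct (halpha a) as [i [Hi1 Hi2]].
  exists (comp (alpha b) (comp (fmap Finv g) i)).
  apply Finv_faithful. apply (iso_epi (halpha b)).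
  rewrite <- nat_alpha. rewrite <- !comp_assoc. change (alpha a) with (nt alpha a).
  apply f_equal. etransitivity; [apply f_equal; exact Hi1|apply comp_id_r].
Qed.

Lemma F_reflect_iso (a b : C12) (f : Hom a b) : is_iso (fmap F f) -> is_iso f.
Proof.
  intros [i' [H1 H2]]. destruct (F_full i') as [i Hi]. exists i. split.
  - apply F_faithful. rewrite fmap_comp, fmap_id, Hi. exact H1.
  - apply F_faithful. rewrite fmap_comp, fmap_id, Hi. exact H2.
Qed.

Lemma Finv_F_alpha (x : C12) : fmap Finv (fmap F (alpha x)) = alpha (Finv (F x)).
Proof.
  symmetry. apply (iso_epi (halpha x)). rewrite <- nat_alpha. reflexivity.
Qed.

Lemma Finv_faithfulA (a b a' b' : C1) (f : Hom a b) (f' : Hom a' b') :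
  a = a' -> b = b' -> mkA (fmap Finv f) = mkA (fmap Finv f') -> mkA f = mkA f'.
Proof.
  intros -> -> H. apply AE_same in H. apply Finv_faithful in H. subst. reflexivity.
Qed.

Lemma F_faithfulA (a b a' b' : C12) (f : Hom a b) (f' : Hom a' b') :
  a = a' -> b = b' -> mkA (fmap F f) = mkA (fmap F f') -> mkA f = mkA f'.
Proof.
  intros -> -> H. apply AE_same in H. apply F_faithful in H. subst. reflexivity.
Qed.

Lemma FalphaA (x y : C12) : F x = F y ->
  mkA (fmap F (alpha x)) = mkA (fmap F (alpha y)).
Proof.
  intro e. apply Finv_faithfulA.
  - change (F (Finv (F x)) = F (Finv (F y))). rewrite e. reflexivity.
  - exact e.
  - rewrite !Finv_F_alpha. change (mkA (C:=C12) (alpha (Finv (F x))) = mkA (alpha (Finv (F y)))). rewrite e. reflexivity.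
Qed.

Lemma tr_inv c1 c2 (psi : Hom (G (Finv c1)) c2) pf c1' c2' (psi' : Hom (G (Finv c1')) c2') pf' :
  (existT _ c1 (existT _ c2 (exist _ psi pf)) : triples G Finv)
  = existT _ c1' (existT _ c2' (exist _ psi' pf')) ->
  c1 = c1' /\ c2 = c2' /\ mkA psi = mkA psi'.
Proof.
  intro H. assert (e1 := f_equal (@projT1 _ _) H). simpl in e1. subst c1'.
  apply inj2 in H. assert (e2 := f_equal (@projT1 _ _) H). simpl in e2. subst c2'.
  apply inj2 in H. apply (f_equal (@proj1_sig _ _)) in H. simpl in H. subst.
  split; [reflexivity|split; reflexivity].
Qed.

Lemma tr_intro c1 c2 (psi : Hom (G (Finv c1)) c2) pf c1' c2' (psi' : Hom (G (Finv c1')) c2') pf' :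
  c1 = c1' -> c2 = c2' -> mkA psi = mkA psi' ->
  (existT _ c1 (existT _ c2 (exist _ psi pf)) : triples G Finv)
  = existT _ c1' (existT _ c2' (exist _ psi' pf')).
Proof.
  intros -> -> H. apply AE_same in H. subst. f_equal. f_equal. f_equal. apply proof_irrelevance.
Qed.


Lemma b_to_c : bijective (triple_map G halpha) -> ULiftA (Fpair F G).
Proof.
  intros [Hinj Hsurj] c [[[a1 a2] [d1 d2]] [u1 u2]] Hs Hi.
  change ((a1, a2) = (F c, G c)) in Hs. injection Hs as E1 E2. subst a1 a2.
  simpl in u1, u2.
  change (is_iso (C := ProdCat C1 C2) (a := (F c, G c)) (b := (d1, d2)) (u1, u2)) in Hi.
  apply prod_iso in Hi. simpl in Hi. destruct Hi as [Hi1 Hi2].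
  destruct Hi1 as [i1 [Hi1a Hi1b]].
  pose (psi := comp u2 (comp (fmap G (alpha c)) (fmap G (fmap Finv i1)))).
  assert (Hpsi : is_iso psi).
  { apply comp_iso; [apply comp_iso|exact Hi2].
    - apply fmap_iso. apply fmap_iso. exists u1. split; assumption.
    - exact (fmap_iso G (halpha c)). }
  assert (Hpu : comp psi (fmap G (fmap Finv u1)) = comp u2 (fmap G (alpha c))).
  { unfold psi. rewrite <- !comp_assoc, <- !fmap_comp, Hi1a, !fmap_id, comp_id_r.
    reflexivity. }
  clearbody psi.
  destruct (Hsurj (existT _ d1 (existT _ d2 (exist _ psi Hpsi)))) as [x Hx].
  unfold triple_map in Hx. apply tr_inv in Hx. destruct Hx as [ex1 [ex2 Hx]].
  subst d1 d2. apply AE_same in Hx. subst psi.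
  destruct (F_full u1) as [v Fv].
  assert (Gv : fmap G v = u2).
  { apply (iso_mono (fmap_iso G (halpha c))).
    rewrite <- fmap_comp. change (alpha c) with (nt alpha c) at 1.
    rewrite nat_alpha, fmap_comp, Fv. exact Hpu. }
  exists (mkA v). split; [reflexivity|]. split.
  { apply F_reflect_iso. change (is_iso (fmap F v)). rewrite Fv. exists i1. split; assumption. }
  split.
  { change (mkA (C := ProdCat C1 C2) (a := (F c, G c)) (b := (F x, G x)) (fmap F v, fmap G v)
            = mkA (C := ProdCat C1 C2) (a := (F c, G c)) (b := (F x, G x)) (u1, u2)).
    rewrite Fv, Gv. reflexivity. }
  intros [[c0 y] w] Hs' Hi' Hm.
  change (c0 = c) in Hs'. subst c0. simpl in w.
  change (mkA (C := ProdCat C1 C2) (a := (F c, G c)) (b := (F y, G y)) (fmap F w, fmap G w)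
          = mkA (C := ProdCat C1 C2) (a := (F c, G c)) (b := (F x, G x)) (u1, u2)) in Hm.
  apply AE_unpair in Hm. destruct Hm as [HmF HmG].
  change (is_iso w) in Hi'.
  assert (Hyx : y = x).
  { apply Hinj. unfold triple_map. apply tr_intro.
    - exact (proj2 (AE_ends HmF)).
    - exact (proj2 (AE_ends HmG)).
    - apply (AE_cancel (f := fmap G (fmap Finv (fmap F w))) (f' := fmap G (fmap Finv u1))).
      + apply fmap_iso, fmap_iso, fmap_iso, Hi'.
      + apply AE_map, AE_map, HmF.
      + assert (E : comp (fmap G (alpha y)) (fmap G (fmap Finv (fmap F w)))
                    = comp (fmap G w) (fmap G (alpha c))).
        { rewrite <- !fmap_comp. f_equal. symmetry. exact (nat_alpha w). }
        assert (E2 : mkA (comp (fmap G (alpha y)) (fmap G (fmap Finv (fmap F w))))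
                     = mkA (comp (fmap G w) (fmap G (alpha c)))) by exact (f_equal (@mkA C2 _ _) E).
        assert (E3 : mkA (comp (fmap G (alpha x)) (fmap G (fmap Finv u1)))
                     = mkA (comp u2 (fmap G (alpha c)))) by exact (f_equal (@mkA C2 _ _) Hpu).
        eapply eq_trans; [exact E2|]. eapply eq_trans; [|symmetry; exact E3].
        apply AE_comp; [reflexivity|exact HmG]. }
  subst y. apply AE_same in HmF. rewrite <- Fv in HmF. apply F_faithful in HmF. subst w.
  reflexivity.
Qed.


Lemma c_to_b : ULiftA (Fpair F G) -> bijective (triple_map G halpha).
Proof.
  intro HA. split.
  - intros x y Hxy. unfold triple_map in Hxy. apply tr_inv in Hxy.
    destruct Hxy as [e1 [e2 eG]].
    assert (eF := FalphaA e1).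
    destruct (HA (Finv (F x)) (mapA (Fpair F G) (mkA (alpha x))) eq_refl
                 (isoA_map (Fpair F G) (v := mkA (alpha x)) (halpha x))) as [v [_ [_ [_ Hu]]]].
    assert (Hx := Hu (mkA (alpha x)) eq_refl (halpha x) eq_refl).
    assert (Hy : mkA (alpha y) = v).
    { apply Hu.
      - change (Finv (F y) = Finv (F x)). rewrite e1. reflexivity.
      - exact (halpha y).
      - change (mkA (C := ProdCat C1 C2) (a := (F (Finv (F y)), G (Finv (F y)))) (b := (F y, G y))
                  (fmap F (alpha y), fmap G (alpha y))
                = mkA (C := ProdCat C1 C2) (a := (F (Finv (F x)), G (Finv (F x)))) (b := (F x, G x))
                  (fmap F (alpha x), fmap G (alpha x))).
        apply AE_pair; symmetry; assumption. }
    rewrite <- Hy in Hx. exact (proj2 (AE_ends Hx)).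
  - intros [c1 [c2 [psi Hpsi]]].
    assert (Hb : is_iso (C := ProdCat C1 C2) (a := (F (Finv c1), G (Finv c1))) (b := (c1, c2))
                   (beta c1, psi)).
    { apply prod_iso. split; [exact (hbeta c1)|exact Hpsi]. }
    destruct (HA (Finv c1) (mkA (C := ProdCat C1 C2) (a := (F (Finv c1), G (Finv c1))) (b := (c1, c2))
                   (beta c1, psi)) eq_refl Hb) as [[[a c'] v1] [Hs1 [_ [Hm1 _]]]].
    change (a = Finv c1) in Hs1. subst a. simpl in v1.
    change (mkA (C := ProdCat C1 C2) (a := (F (Finv c1), G (Finv c1))) (b := (F c', G c'))
              (fmap F v1, fmap G v1)
            = mkA (C := ProdCat C1 C2) (a := (F (Finv c1), G (Finv c1))) (b := (c1, c2))
              (beta c1, psi)) in Hm1.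
    apply AE_unpair in Hm1. destruct Hm1 as [Hm1 _].
    destruct (AE_ends Hm1) as [_ e1].
    assert (ea : F (Finv (F c')) = F (Finv c1)) by (rewrite e1; reflexivity).
    destruct (arr_fix (fmap F (alpha c')) ea e1) as [f1 Hf1].
    assert (Hf1i : is_iso f1) by exact (AE_iso Hf1 (fmap_iso F (halpha c'))).
    assert (Hb2 : is_iso (C := ProdCat C1 C2) (a := (F (Finv c1), G (Finv c1))) (b := (c1, c2))
                   (f1, psi)).
    { apply prod_iso. split; [exact Hf1i|exact Hpsi]. }
    destruct (HA (Finv c1) (mkA (C := ProdCat C1 C2) (a := (F (Finv c1), G (Finv c1))) (b := (c1, c2))
                   (f1, psi)) eq_refl Hb2) as [[[a c''] v2] [Hs2 [_ [Hm2 _]]]].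
    change (a = Finv c1) in Hs2. subst a. simpl in v2.
    change (mkA (C := ProdCat C1 C2) (a := (F (Finv c1), G (Finv c1))) (b := (F c'', G c''))
              (fmap F v2, fmap G v2)
            = mkA (C := ProdCat C1 C2) (a := (F (Finv c1), G (Finv c1))) (b := (c1, c2))
              (f1, psi)) in Hm2.
    apply AE_unpair in Hm2. destruct Hm2 as [HF2 HG2].
    destruct (AE_ends HF2) as [_ e2]. destruct (AE_ends HG2) as [_ e3].
    assert (Hv : mkA v2 = mkA (alpha c'')).
    { apply F_faithfulA.
      - change (Finv c1 = Finv (F c'')). rewrite e2. reflexivity.
      - reflexivity.
      - eapply eq_trans; [exact HF2|]. eapply eq_trans; [symmetry; exact Hf1|].
        apply FalphaA. rewrite e1, e2. reflexivity. }
    exists c''. unfold triple_map. apply tr_intro.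
    + exact e2.
    + exact e3.
    + eapply eq_trans; [|exact HG2]. symmetry. apply AE_map. exact Hv.
Qed.

End Equiv.

Lemma graph_ULiftA (C1 C2 : Cat) (Phi : Functor C1 C2) :
  ULiftA (Fpair (Gproj1 Phi) (Gproj2 Phi)).
Proof.
  intros c [[[a1 a2] [d1 d2]] [u1 u2]] Hs Hi.
  change ((a1, a2) = (g1 c, g2 c)) in Hs. injection Hs as E1 E2. subst a1 a2.
  simpl in u1, u2.
  change (is_iso (C := ProdCat C1 C2) (a := (g1 c, g2 c)) (b := (d1, d2)) (u1, u2)) in Hi.
  apply prod_iso in Hi. simpl in Hi. destruct Hi as [[i1 [Hi1a Hi1b]] [i2 [Hi2a Hi2b]]].
  assert (Hpi : is_iso (comp u2 (comp (gpsi c) (fmap Phi i1)))).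
  { apply comp_iso; [apply comp_iso|exists i2; split; assumption].
    - apply fmap_iso. exists u1. split; assumption.
    - apply gpsi_iso. }
  pose (c' := {| g1 := d1; g2 := d2; gpsi := comp u2 (comp (gpsi c) (fmap Phi i1));
                 gpsi_iso := Hpi |}).
  assert (Hc : comp (gpsi c') (fmap Phi u1) = comp u2 (gpsi c)).
  { simpl. rewrite <- !comp_assoc, <- fmap_comp, Hi1a, fmap_id, comp_id_r. reflexivity. }
  pose (v := @Build_GHom C1 C2 Phi c c' u1 u2 Hc).
  assert (Hc' : comp (gpsi c) (fmap Phi i1) = comp i2 (gpsi c')).
  { simpl. rewrite !comp_assoc, Hi2a, comp_id_l. reflexivity. }
  pose (vi := @Build_GHom C1 C2 Phi c' c i1 i2 Hc').
  exists (mkA (C := GraphCat Phi) v). split; [reflexivity|]. split.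
  { exists vi. split; apply GHom_eq; simpl; assumption. }
  split; [reflexivity|].
  intros [[c0 y] w] Hs' Hi' Hm. change (c0 = c) in Hs'. subst c0. simpl in w.
  destruct y as [y1 y2 psiy Hpsiy].
  change (mkA (C := ProdCat C1 C2) (a := (g1 c, g2 c)) (b := (y1, y2)) (h1 w, h2 w)
          = mkA (C := ProdCat C1 C2) (a := (g1 c, g2 c)) (b := (d1, d2)) (u1, u2)) in Hm.
  destruct (AE_ends Hm) as [_ E]. injection E as -> ->.
  apply AE_same in Hm. injection Hm as Hw1 Hw2.
  assert (Ep : psiy = comp u2 (comp (gpsi c) (fmap Phi i1))).
  { assert (Hw := hcomm w). simpl in Hw. rewrite Hw1, Hw2 in Hw.
    rewrite comp_assoc, <- Hw, <- comp_assoc, <- fmap_comp, Hi1b, fmap_id, comp_id_r.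
    reflexivity. }
  subst psiy.
  assert (Hpsiy = Hpi) by apply proof_irrelevance. subst Hpsiy.
  change (mkA (C := GraphCat Phi) (a := c) (b := c') w = mkA (C := GraphCat Phi) (a := c) (b := c') v).
  f_equal. apply GHom_eq; assumption.
Qed.

Lemma mapA_id (C : Cat) (v : Arr C) : mapA (Fid C) v = v.
Proof. destruct v as [[a b] f]. reflexivity. Qed.

Lemma ULiftA_transfer (X Y D : Cat) (H' : Functor Y D) (K : Functor X Y) (L : Functor Y X) :
  Fcomp L K = Fid X -> Fcomp K L = Fid Y -> ULiftA H' -> ULiftA (Fcomp H' K).
Proof.
  intros ELK EKL HA c u Hs Hi.
  destruct (HA (K c) u Hs Hi) as [v' [Hs' [Hi' [Hm Hu]]]].
  assert (LK : forall x, L (K x) = x).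
  { intro x. exact (f_equal (fun M => fobj M x) ELK). }
  exists (mapA L v'). split.
  { change (L (src v') = c). rewrite Hs'. apply LK. }
  split; [apply isoA_map; exact Hi'|]. split.
  { change (mapA H' (mapA (Fcomp K L) v') = u). rewrite EKL, mapA_id. exact Hm. }
  intros w Hsw Hiw Hmw.
  assert (E : mapA K w = v').
  { apply Hu.
    - change (K (src w) = K c). rewrite Hsw. reflexivity.
    - apply isoA_map; exact Hiw.
    - exact Hmw. }
  rewrite <- E. change (w = mapA (Fcomp L K) w). rewrite ELK, mapA_id. reflexivity.
Qed.

Lemma cast_id (C : Cat) (a a' : C) (e : a = a') : hom_cast e e (idm a) = idm a'.
Proof. destruct e. reflexivity. Qed.

Lemma cast_comp (C : Cat) (a b c a' b' c' : C) (ea : a = a') (eb : b = b') (ec : c = c')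
  (f : Hom a b) (g : Hom b c) :
  hom_cast ea ec (comp g f) = comp (hom_cast eb ec g) (hom_cast ea eb f).
Proof. destruct ea, eb, ec. reflexivity. Qed.

Lemma cast_cast (C : Cat) (a b a' b' a'' b'' : C) (ea : a = a') (eb : b = b')
  (ea' : a' = a'') (eb' : b' = b'') (f : Hom a b) :
  hom_cast ea' eb' (hom_cast ea eb f) = hom_cast (eq_trans ea ea') (eq_trans eb eb') f.
Proof. destruct ea, eb, ea', eb'. reflexivity. Qed.

Lemma cast_refl (C : Cat) (a b : C) (ea : a = a) (eb : b = b) (f : Hom a b) :
  hom_cast ea eb f = f.
Proof.
  rewrite (proof_irrelevance _ ea eq_refl), (proof_irrelevance _ eb eq_refl). reflexivity.
Qed.

Lemma cast_map (C D : Cat) (M : Functor C D) (a b a' b' : C) (ea : a = a') (eb : b = b')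
  (f : Hom a b) :
  fmap M (hom_cast ea eb f) = hom_cast (f_equal M ea) (f_equal M eb) (fmap M f).
Proof. destruct ea, eb. reflexivity. Qed.

Lemma catiso (X Y : Cat) (K : Functor X Y) :
  (forall x x', K x = K x' -> x = x') -> (forall y, exists x, K x = y) ->
  (forall a b (f g : Hom a b), fmap K f = fmap K g -> f = g) ->
  (forall a b (g : Hom (K a) (K b)), exists f, fmap K f = g) ->
  exists L : Functor Y X, Fcomp L K = Fid X /\ Fcomp K L = Fid Y.
Proof.
  intros Kinj Ksurj Kfaith Kfull.
  pose (Lo := fun y => proj1_sig (constructive_indefinite_description _ (Ksurj y))).
  assert (KLo : forall y, K (Lo y) = y).
  { intro y. exact (proj2_sig (constructive_indefinite_description _ (Ksurj y))). }
  pose (Lm := fun y y' (g : Hom y y') =>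
     proj1_sig (constructive_indefinite_description _
       (Kfull (Lo y) (Lo y') (hom_cast (eq_sym (KLo y)) (eq_sym (KLo y')) g)))).
  assert (KLm : forall y y' (g : Hom y y'),
             fmap K (Lm y y' g) = hom_cast (eq_sym (KLo y)) (eq_sym (KLo y')) g).
  { intros y y' g. exact (proj2_sig (constructive_indefinite_description _
       (Kfull (Lo y) (Lo y') (hom_cast (eq_sym (KLo y)) (eq_sym (KLo y')) g)))). }

  assert (Lid : forall y, Lm y y (idm y) = idm (Lo y)).
  { intro y. apply Kfaith. rewrite KLm, fmap_id, cast_id. reflexivity. }
  assert (Lcomp : forall a b c (f : Hom a b) (g : Hom b c),
             Lm a c (comp g f) = comp (Lm b c g) (Lm a b f)).
  { intros a b c f g. apply Kfaith. rewrite fmap_comp, !KLm.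
    apply (cast_comp (eq_sym (KLo a)) (eq_sym (KLo b)) (eq_sym (KLo c))). }
  pose (L := {| fobj := Lo; fmap := Lm; fmap_id := Lid; fmap_comp := Lcomp |}).
  exists L. split.
  - apply functor_eq_eq. exists (fun x => Kinj _ _ (KLo (K x))).
    intros a b f. apply Kfaith. change (fmap (Fid X) f) with f.
    rewrite cast_map. change (fmap (Fcomp L K) f) with (Lm (K a) (K b) (fmap K f)).
    change (hom_cast (f_equal K (Kinj _ _ (KLo (K a)))) (f_equal K (Kinj _ _ (KLo (K b))))
              (fmap K (Lm (K a) (K b) (fmap K f))) = fmap K f).
    rewrite KLm, cast_cast, cast_refl. reflexivity.
  - apply functor_eq_eq. exists KLo.
    intros a b f.
    change (hom_cast (KLo a) (KLo b) (fmap K (Lm a b f)) = f).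
    rewrite KLm, cast_cast, cast_refl. reflexivity.
Qed.

Lemma feq_refl (C D : Cat) (M : Functor C D) : functor_eq M M.
Proof. exists (fun _ => eq_refl). intros; reflexivity. Qed.

Lemma back_lemma (X Y D : Cat) (A : Functor Y D) (M : Functor X D) (K : Functor X Y)
  (L : Functor Y X) : Fcomp A K = M -> Fcomp K L = Fid Y -> functor_eq (Fcomp M L) A.
Proof.
  intros <- EKL.
  replace (Fcomp (Fcomp A K) L) with (Fcomp A (Fcomp K L))
    by (apply functor_eq_eq; exists (fun _ => eq_refl); intros; reflexivity).
  rewrite EKL. exists (fun _ => eq_refl). intros; reflexivity.
Qed.

Section Final.
Variables (C1 C2 C12 : Cat) (F : Functor C12 C1) (G : Functor C12 C2)
  (Finv : Functor C1 C12)
  (alpha : NatTrans (Fcomp Finv F) (Fid C12)) (halpha : is_natiso alpha).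

Definition Phi0 := Fcomp G Finv.

Definition Kob (c : C12) : GOb Phi0 :=
  @Build_GOb C1 C2 Phi0 (F c) (G c) (fmap G (alpha c)) (fmap_iso G (halpha c)).

Lemma Kcomm (a b : C12) (f : Hom a b) :
  comp (gpsi (Kob b)) (fmap Phi0 (fmap F f)) = comp (fmap G f) (gpsi (Kob a)).
Proof.
  change (comp (fmap G (alpha b)) (fmap G (fmap Finv (fmap F f)))
          = comp (fmap G f) (fmap G (alpha a))).
  rewrite <- !fmap_comp. f_equal. symmetry. apply nat_alpha.
Qed.

Definition Kmap (a b : C12) (f : Hom a b) : GHom (Kob a) (Kob b) :=
  @Build_GHom C1 C2 Phi0 (Kob a) (Kob b) (fmap F f) (fmap G f) (Kcomm f).

Definition KF : Functor C12 (GraphCat Phi0).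
Proof.
  refine {| fobj := Kob : C12 -> GraphCat Phi0; fmap := Kmap |}.
  - intro a. apply GHom_eq; simpl; apply fmap_id.
  - intros a b c f g. apply GHom_eq; simpl; apply fmap_comp.
Defined.

End Final.

Theorem lemma4p6p5 (C1 C2 C12 : Cat) (F : Functor C12 C1) (G : Functor C12 C2)
  (Finv : Functor C1 C12)
  (alpha : NatTrans (Fcomp Finv F) (Fid C12)) (halpha : is_natiso alpha)
  (beta : NatTrans (Fcomp F Finv) (Fid C1)) (hbeta : is_natiso beta) :
  (admissible F G <-> bijective (triple_map G halpha)) /\
  (bijective (triple_map G halpha) <-> unique_iso_lifting (Fpair F G)).
Proof.
  split; [split|].
  - intros [Phi' [K' [L' [E1 [E2 [E3 [E4 [E5 E6]]]]]]]].
    apply (c_to_b halpha hbeta).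
    apply functor_eq_eq in E1. apply functor_eq_eq in E2.
    apply functor_eq_eq in E5. apply functor_eq_eq in E6.
    assert (EH : Fpair F G = Fcomp (Fpair (Gproj1 Phi') (Gproj2 Phi')) K').
    { rewrite <- E1, <- E2. apply functor_eq_eq. exists (fun _ => eq_refl). intros; reflexivity. }
    rewrite EH. apply (ULiftA_transfer E5 E6). apply graph_ULiftA.
  - intros [Hinj Hsurj]. exists (Phi0 G Finv).
    set (K := KF G halpha).
    assert (Kinj : forall x x', K x = K x' -> x = x').
    { intros x x' E. apply Hinj.
      exact (f_equal (fun o : GOb (Phi0 G Finv) =>
               (existT _ (g1 o) (existT _ (g2 o) (exist _ (gpsi o) (gpsi_iso o))) : triples G Finv)) E). }
    assert (Ksurj : forall y, exists x, K x = y).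
    { intros [y1 y2 p Hp]. destruct (Hsurj (existT _ y1 (existT _ y2 (exist (fun psi : Hom (G (Finv y1)) y2 => is_iso psi) p Hp)))) as [x Hx].
      exists x. unfold triple_map in Hx. destruct (@tr_inv C1 C2 C12 G Finv _ _ _ _ _ _ _ _ Hx) as [e1 [e2 eA]].
      subst y1 y2. apply AE_same in eA. subst p.
      change (@Build_GOb C1 C2 (Phi0 G Finv) (F x) (G x) (fmap G (alpha x)) (fmap_iso G (halpha x))
              = @Build_GOb C1 C2 (Phi0 G Finv) (F x) (G x) (fmap G (alpha x)) Hp).
      f_equal. apply proof_irrelevance. }
    assert (Kfaith : forall a b (f g : Hom a b), fmap K f = fmap K g -> f = g).
    { intros a b f g E. apply (f_equal (fun h => h1 h)) in E. simpl in E.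
      exact (F_faithful halpha E). }
    assert (Kfull : forall a b (g : Hom (K a) (K b)), exists f, fmap K f = g).
    { intros a b [g1' g2' gc]. simpl in g1', g2'.
      destruct (F_full halpha hbeta g1') as [f Hf]. exists f.
      apply GHom_eq; simpl; [exact Hf|].
      apply (iso_mono (fmap_iso G (halpha a))).
      pose proof (@Kcomm C1 C2 C12 F G Finv alpha halpha a b f) as Hk. simpl in Hk, gc.
      change (comp (fmap G f) (fmap G (alpha a)) = comp g2' (fmap G (alpha a))).
      subst g1'. eapply eq_trans; [symmetry; exact Hk|]. eapply eq_trans; [|exact gc].
      reflexivity. }
    destruct (catiso Kinj Ksurj Kfaith Kfull) as [L [ELK EKL]].
    assert (EF : Fcomp (Gproj1 (Phi0 G Finv)) K = F) by (apply functor_eq_eq; exists (fun _ => eq_refl); intros; reflexivity).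
    assert (EG : Fcomp (Gproj2 (Phi0 G Finv)) K = G) by (apply functor_eq_eq; exists (fun _ => eq_refl); intros; reflexivity).
    exists K, L. split; [exists (fun _ => eq_refl); intros; reflexivity|].
    split; [exists (fun _ => eq_refl); intros; reflexivity|].
    split; [exact (back_lemma EF EKL)|].
    split; [exact (back_lemma EG EKL)|].
    split; [rewrite ELK; apply feq_refl|rewrite EKL; apply feq_refl].
  - rewrite ULift_iff. split; [apply (b_to_c hbeta)|apply (c_to_b halpha hbeta)].
Qed.
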